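(* Let $G$ and $H$ be finite simple graphs, where $G$ has no isolated vertices and $\gamma_t(G)=2\gamma(G)$. Let $S$ be a dominating set of $G$ of minimum cardinality $\gamma(G)$ and let $S'$ be a dominating set of $H$ of minimum cardinality with $|S'|=2$. Then $S\times S'$ is a dominating set of minimum cardinality of the lexicographic product $G\circ H$.
   Context: A set $D\subseteq V(G)$ is a dominating set if every vertex outside $D$ has a neighbor in $D$; $\gamma(\cdot)$ denotes the minimum cardinality of a dominating set. A set $D_t$ is a total dominating set if every vertex of the graph is adjacent to a vertex of $D_t$; $\gamma_t(G)$ is the minimum cardinality of a total dominating set (defined for graphs without isolated vertices). The lexicographic product $G\circ H$ has vertex set $V(G)\times V(H)$, with $(a,x)$ adjacent to $(b,y)$ iff either $\{a,b\}\in E(G)$, or $a=b$ and $\{x,y\}\in E(H)$. *)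

(* Defs.v *)
From mathcomp Require Import all_boot.
Set Implicit Arguments. Unset Strict Implicit. Unset Printing Implicit Defensive.

Definition simple_graph (T : finType) (e : rel T) : Prop :=
  symmetric e /\ irreflexive e.

Definition dominating (T : finType) (e : rel T) (D : {set T}) : bool :=
  [forall x, (x \in D) || [exists y in D, e x y]].

Definition total_dominating (T : finType) (e : rel T) (D : {set T}) : bool :=
  [forall x, [exists y in D, e x y]].

Definition no_isolated (T : finType) (e : rel T) : Prop :=
  forall x, exists y, e x y.

(* domination number: minimum size of a dominating set (setT always dominates,
   so the default #|T| never exceeds the true minimum). *)
Definition gamma (T : finType) (e : rel T) : nat :=
  \big[minn/#|T|]_(D : {set T} | dominating e D) #|D|.

(* total domination number; meaningful when there are no isolated vertices
   (then setT is total dominating, so the default #|T| is harmless). *)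
Definition gamma_t (T : finType) (e : rel T) : nat :=
  \big[minn/#|T|]_(D : {set T} | total_dominating e D) #|D|.

Definition lexprod (T1 T2 : finType) (e1 : rel T1) (e2 : rel T2) : rel (T1 * T2) :=
  fun u v => e1 u.1 v.1 || ((u.1 == v.1) && e2 u.2 v.2).

(* Main.v *)
Require Import Defs.
From mathcomp Require Import all_boot.
Set Implicit Arguments. Unset Strict Implicit.

Lemma bigmin_le (I:finType) (P: pred I) (F: I->nat) x0 j :
  P j -> \big[minn/x0]_(i | P i) F i <= F j.
Proof.
move=> Pj; have: j \in index_enum I by rewrite mem_index_enum.
elim: (index_enum I) => [//|a s IH].
rewrite inE big_cons => /orP [/eqP<-|js].
  by rewrite Pj geq_minl.
case: (P a); last exact: IH.
by rewrite geq_min IH ?orbT.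
Qed.

Lemma gamma_le (T : finType) (e : rel T) (D : {set T}) :
  dominating e D -> gamma e <= #|D|.
Proof. by move=> hD; exact: bigmin_le. Qed.

Lemma gamma_t_le (T : finType) (e : rel T) (D : {set T}) :
  total_dominating e D -> gamma_t e <= #|D|.
Proof. by move=> hD; exact: bigmin_le. Qed.

Lemma lower (V W : finType) (eG : rel V) (eH : rel W) (D : {set V * W}) (w0 : W) :
  no_isolated eG -> 2 <= gamma eH ->
  dominating (lexprod eG eH) D -> gamma_t eG <= #|D|.
Proof.
move=> noi g2 /forallP hD.
set P := [set d.1 | d in D].
set L := [set a in P | ~~ [exists b in P, eG a b]].
pose f a := odflt a [pick b | eG a b].
have hf a : eG a (f a).
  rewrite /f; case: pickP => [//|/= h]; exfalso.
  by case: (noi a) => b; rewrite h.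
set T := P :|: [set f a | a in L].
have hT : total_dominating eG T.
  apply/forallP => v.
  case vP: (v \in P).
    case: (boolP [exists b in P, eG v b]) => [/existsP [b /andP [bP eb]]|nb].
      by apply/existsP; exists b; rewrite inE bP.
    apply/existsP; exists (f v); rewrite hf andbT inE; apply/orP; right.
    by apply: imset_f; rewrite inE vP nb.
  move: (hD (v, w0)) => /orP [vD|/existsP [d /andP [dD]]].
    by move: vP; rewrite (imset_f fst vD).
  rewrite /lexprod /= => /orP [ed|/andP [/eqP ev _]].
    by apply/existsP; exists d.1; rewrite ed inE (imset_f fst dD).
  by move: vP; rewrite ev (imset_f fst dD).
apply: (leq_trans (gamma_t_le hT)).
apply: (leq_trans (leq_card_setU _ _)).
apply: (@leq_trans (#|P| + #|L|)); first by rewrite leq_add2l leq_imset_card.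
have -> : #|D| = \sum_(a : V) #|[set d in D | d.1 == a]|.
  rewrite -sum1_card (partition_big fst predT) //=.
  apply: eq_bigr => a _; rewrite -sum1dep_card; apply: eq_bigl => d.
  by [].
have -> : #|P| + #|L| = \sum_(a : V) ((a \in P) + (a \in L)).
  rewrite big_split /= -!sum1_card !big_mkcond /=.
  by congr (_ + _); rewrite big_mkcond; apply: eq_bigr => a _; case: (_ \in _).
apply: leq_sum => a _.
case aL: (a \in L).
  have aP : a \in P by move: aL; rewrite inE => /andP [].
  rewrite aP /=.
  move: aL; rewrite inE aP /= => nb.
  set Y := [set y | (a, y) \in D].
  have hY : dominating eH Y.
    apply/forallP => x.
    move: (hD (a, x)) => /orP [axD|/existsP [d /andP [dD]]].
      by rewrite inE axD.
    rewrite /lexprod /= => /orP [ed|/andP [/eqP ea ex]].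
      by move: nb; case/existsP; exists d.1; rewrite ed (imset_f fst dD).
    apply/orP; right; apply/existsP; exists d.2; rewrite ex andbT inE.
    by rewrite ea -surjective_pairing.
  apply: (leq_trans g2); apply: (leq_trans (gamma_le hY)).
  have -> : Y = [set d.2 | d in [set d in D | d.1 == a]].
    apply/setP => y; rewrite inE; apply/idP/imsetP.
      by move=> h; exists (a, y) => //; rewrite inE h /=.
    case=> d; rewrite inE => /andP [dD /eqP da] ->.
    by rewrite -da -surjective_pairing.
  exact: leq_imset_card.
rewrite addn0.
case aP: (a \in P) => //=.
rewrite card_gt0; apply/set0Pn.
case/imsetP: aP => d dD ->; exists d; by rewrite inE dD eqxx.
Qed.

Unset Implicit Arguments.

Theorem mainTheorem8 (V W : finType) (eG : rel V) (eH : rel W)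
  (S : {set V}) (S' : {set W}) :
  simple_graph eG -> simple_graph eH ->
  no_isolated eG ->
  gamma_t eG = 2 * gamma eG ->
  dominating eG S -> #|S| = gamma eG ->
  dominating eH S' -> #|S'| = gamma eH -> #|S'| = 2 ->
  dominating (lexprod eG eH) (setX S S') /\
  #|setX S S'| = gamma (lexprod eG eH).
Proof.
move=> _ _ noi ht /forallP hS cS /forallP hS' cS' c2.
have [y0 y0S] : exists y0, y0 \in S'.
  by apply/set0Pn; rewrite -card_gt0 c2.
have dom : dominating (lexprod eG eH) (setX S S').
  apply/forallP => [[a x]].
  case: (orP (hS a)) => [aS|/existsP [b /andP [bS eb]]].
    case: (orP (hS' x)) => [xS|/existsP [y /andP [yS ey]]].
      by rewrite in_setX aS xS.
    apply/orP; right; apply/existsP; exists (a, y).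
    by rewrite in_setX aS yS /lexprod /= eqxx ey orbT.
  apply/orP; right; apply/existsP; exists (b, y0).
  by rewrite in_setX bS y0S /lexprod /= eb.
split=> //.
have g2 : 2 <= gamma eH by rewrite -cS' c2.
apply/eqP; rewrite eqn_leq gamma_le // andbT.
rewrite cardsX c2 cS mulnC -ht.
rewrite /gamma; apply: (big_ind (fun k => gamma_t eG <= k)).
- have hT : dominating (lexprod eG eH) setT by apply/forallP => u; rewrite inE.
  by rewrite -cardsT; apply: lower y0 noi g2 hT.
- by move=> m n hm hn; rewrite leq_min hm hn.
- by move=> D hD; apply: lower y0 noi g2 hD.
Qed.
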